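(* Let $(s,\pi)$ be a plane permutation on $[n]$, let $h=(i,j,j+1,l)$ with $i\le j<j+1\le l$ and $\{i,j,j+1,l\}\subset[n-1]$, and let $(s^h,\pi^h)=\chi_h\circ(s,\pi)$ (a transpose). Then the difference between the number of cycles of $\pi$ and of $\pi^h$ is even. Furthermore, each of the differences between the number of cycles, the number of odd-length cycles, and the number of even-length cycles of $\pi$ and of $\pi^h$ lies in $\{-2,0,2\}$.
   Context: Permutations of $[n]=\{1,\dots,n\}$ are multiplied as composition of maps, $(\sigma\tau)(x)=\sigma(\tau(x))$; fixed points count as cycles (of length $1$). A plane permutation on $[n]$ is a pair $(s,\pi)$ where $s=(s_0s_1\cdots s_{n-1})$ is an $n$-cycle on $[n]$, written with a fixed starting element $s_0$, and $\pi$ is an arbitrary permutation of $[n]$; its diagonal is $D=s\circ\pi^{-1}$. For $h=(i,j,k,l)$ with $i\le j<k\le l$ and $\{i,j,k,l\}\subset[n-1]$, let $s^h$ be the $n$-cycle $(s_0,\dots,s_{i-1},s_k,\dots,s_l,s_{j+1},\dots,s_{k-1},s_i,\dots,s_j,s_{l+1},\dots,s_{n-1})$ obtained by interchanging the blocks $s_i\cdots s_j$ and $s_k\cdots s_l$ (when $k=j+1$ the middle block is empty), and let $\pi^h=D^{-1}\circ s^h$. Write $(s^h,\pi^h)=\chi_h\circ(s,\pi)$. *)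

(* Defs.v *)
From mathcomp Require Import all_boot all_order all_algebra all_fingroup.
Set Implicit Arguments. Unset Strict Implicit. Unset Printing Implicit Defensive.

(* Ground set [n] is modelled by 'I_n (relabelling x |-> x+1).
   An n-cycle s written with fixed start s_0 is a sequence sq = [s_0;...;s_{n-1}]
   of n distinct elements; the associated permutation maps s_t to s_{t+1 mod n},
   i.e. it is the function (next sq) of path.v. *)

Definition slice (T : Type) (sq : seq T) (a b : nat) : seq T :=
  take (b.+1 - a) (drop a sq).

(* s^h for h = (i,j,k,l): interchange blocks s_i..s_j and s_k..s_l. *)
Definition block_swap (T : Type) (sq : seq T) (i j k l : nat) : seq T :=
  take i sq ++ slice sq k l ++ slice sq j.+1 k.-1 ++ slice sq i j ++ drop l.+1 sq.

Definition is_cyc_of (n : nat) (sq : seq 'I_n) (p : {perm 'I_n}) : Prop :=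
  forall x, p x = next sq x.

(* cycle statistics (fixed points count as cycles) *)
Definition ncyc (n : nat) (p : {perm 'I_n}) : nat := #|porbits p|.
Definition nodd (n : nat) (p : {perm 'I_n}) : nat :=
  #|[set c in porbits p | odd #|c|]|.
Definition neven (n : nat) (p : {perm 'I_n}) : nat :=
  #|[set c in porbits p | ~~ odd #|c|]|.

(* composition of maps: (comp f g) x = f (g x); note mathcomp's g * f is this *)
Definition compp (n : nat) (f g : {perm 'I_n}) : {perm 'I_n} := (g * f)%g.

Definition in_m202 (d : int) : bool :=
  [|| d == (-2)%R, d == 0%R | d == 2%R].

Definition zdiff (a b : nat) : int := (a%:Z - b%:Z)%R.

(* Main.v *)
Require Import Defs.
From mathcomp Require Import all_boot all_order all_algebra all_fingroup.
From mathcomp Require Import zify.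
Set Implicit Arguments. Unset Strict Implicit. Unset Printing Implicit Defensive.


Section Orb.
Local Open Scope group_scope.
Variable T : finType.
Implicit Types (s : {perm T}) (x y z : T).

Definition Wt (w : nat -> nat) s := (\sum_(C in porbits s) w #|C|)%N.

Lemma porbit_closed s (Q : {set T}) x : x \in Q -> (forall z, z \in Q -> s z \in Q) ->
  porbit s x \subset Q.
Proof.
move=> xQ cQ; apply/subsetP => z /porbitP [i ->].
elim: i => [|i IH]; first by rewrite expg0 perm1.
by rewrite expgSr permM; apply: cQ.
Qed.

Lemma mem_porbit_s s x z : z \in porbit s x -> s z \in porbit s x.
Proof.
move=> h; have := porbit_perm s 1 z; rewrite expg1 => e.
by rewrite -eq_porbit_mem e eq_porbit_mem.
Qed.

Lemma merge_in s x y : x \notin porbit s y -> x \in porbit (tperm x y * s) y.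
Proof.
move=> nxy; have xy : x != y by apply: contraNneq nxy => ->; apply: porbit_id.
have e1 := porbits_mul_tperm s x y.
have e2 := porbits_mul_tperm (tperm x y * s) x y.
rewrite /= tpermKg in e2; rewrite /= nxy xy in e1; rewrite xy in e2.
case: (boolP (x \in _)) e2 => // _ e2; rewrite /= in e1 e2; lia.
Qed.

Lemma merge_orbit s x y : x \notin porbit s y ->
  porbit (tperm x y * s) x = porbit s x :|: porbit s y.
Proof.
move=> nxy; apply/eqP; rewrite eqEsubset; apply/andP; split.
  apply: porbit_closed; first by rewrite inE porbit_id.
  move=> z; rewrite permM !inE => /orP hz.
  have [tz|tz] : tperm x y z \in porbit s x \/ tperm x y z \in porbit s y.
    case: tpermP => [_|_|_ _]; [right; exact: porbit_id|left; exact: porbit_id|exact: hz].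
  by rewrite mem_porbit_s.
  by apply/orP; right; apply: mem_porbit_s.
have yin : y \in porbit (tperm x y * s) x by rewrite porbit_sym merge_in.
have cl : forall z, z \in porbit (tperm x y * s) x -> s z \in porbit (tperm x y * s) x.
  move=> z hz; have -> : s z = (tperm x y * s) (tperm x y z) by rewrite permM tpermK.
  apply: mem_porbit_s; case: tpermP => [_|_|_ _] //; exact: porbit_id.
apply/subsetP => z; rewrite inE => /orP [] hz.
  by apply: (subsetP (porbit_closed (porbit_id _ _) cl)).
by apply: (subsetP (porbit_closed yin cl)).
Qed.

Lemma merge_other s x y z : z \notin porbit s x -> z \notin porbit s y ->
  porbit (tperm x y * s) z = porbit s z.
Proof.
move=> sxz syz.
suffices exp_id n: ((tperm x y * s) ^+ n) z = (s ^+ n) z.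
  apply/porbit_setP => u; apply/idP/idP=> /porbitP[i ->].
    by rewrite exp_id mem_porbit.
  by rewrite -exp_id mem_porbit.
elim: n => // n IHn; rewrite !expgSr !permM {}IHn tpermD //.
  apply: contraNneq sxz => ->; rewrite porbit_sym; apply: mem_porbit.
apply: contraNneq syz => ->; rewrite porbit_sym; apply: mem_porbit.
Qed.

Lemma merge_W w s x y : x \notin porbit s y ->
  (Wt w (tperm x y * s) + w #|porbit s x| + w #|porbit s y| =
   Wt w s + w (#|porbit s x| + #|porbit s y|))%N.
Proof.
move=> nxy; set ts := tperm x y * s.
set Cx := porbit s x; set Cy := porbit s y.
set R := porbits s :\ Cx :\ Cy.
have Cxs : Cx \in porbits s by apply: imset_f.
have Cys : Cy \in porbits s by apply: imset_f.
have nCxy : Cx != Cy by rewrite eq_porbit_mem.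
have E1 : porbits s = Cx |: (Cy |: R).
  by rewrite /R setD1K ?setD1K // !inE eq_sym nCxy.
have mo := merge_orbit nxy; rewrite -/ts -/Cx -/Cy in mo.
have E2 : porbits ts = (Cx :|: Cy) |: R.
  apply/setP => C; rewrite !inE; apply/idP/idP.
    case/imsetP => z _ ->.
    case: (boolP (z \in Cx :|: Cy)) => hz.
      have : z \in porbit ts x by rewrite mo.
      by rewrite -eq_porbit_mem mo => ->.
    move: hz; rewrite inE negb_or => /andP [hx hy].
    rewrite merge_other // imset_f // andbT.
    apply/orP; right; apply/andP; split.
      by apply: contra hy => /eqP <-; exact: porbit_id.
    by apply: contra hx => /eqP <-; exact: porbit_id.
  case/orP => [/eqP -> | /and3P [hy hx /imsetP [z _ eC]]]; last rewrite eC in hx hy *.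
    by rewrite -mo imset_f.
  rewrite -(@merge_other s x y) ?imset_f //.
    by apply: contra hx => hh; rewrite /Cx eq_porbit_mem.
  by apply: contra hy => hh; rewrite /Cy eq_porbit_mem.
have dis : Cx :&: Cy = set0.
  apply/setP => z; rewrite !inE; apply/negP => /andP [h1 h2].
  rewrite -!eq_porbit_mem in h1 h2; move: nCxy; by rewrite /Cx /Cy -(eqP h1) (eqP h2) eqxx.

have cU : #|Cx :|: Cy| = (#|Cx| + #|Cy|)%N by rewrite cardsU dis cards0 subn0.
have nUR : (Cx :|: Cy) \notin R.
  rewrite !inE; apply/negP => /and3P [_ h /imsetP [z _ ez]].
  move: h; rewrite ez -/Cx; apply/negP; rewrite negbK eq_sym eq_porbit_mem -ez inE.
  by rewrite porbit_id.
have nCxR : Cx \notin Cy |: R by rewrite !inE negb_or nCxy eqxx /= ?andbF.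
have nCyR : Cy \notin R by rewrite !inE eqxx.
rewrite /Wt E2 E1 !big_setU1 //= cU; lia.
Qed.

Lemma step s x y : x != y ->
  ((forall w, Wt w (tperm x y * s) + w #|porbit s x| + w #|porbit s y| =
     Wt w s + w (#|porbit s x| + #|porbit s y|))%N /\
   #|porbit (tperm x y * s) x| = (#|porbit s x| + #|porbit s y|)%N)
  \/
  ((forall w, Wt w s + w #|porbit (tperm x y * s) x| + w #|porbit (tperm x y * s) y| =
     Wt w (tperm x y * s) + w (#|porbit (tperm x y * s) x| + #|porbit (tperm x y * s) y|))%N /\
   #|porbit s x| = (#|porbit (tperm x y * s) x| + #|porbit (tperm x y * s) y|)%N).
Proof.
move=> xy; case: (boolP (x \in porbit s y)) => h; last first.
  left; split; first by move=> w; apply: merge_W.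
  rewrite merge_orbit // cardsU.
  suff -> : porbit s x :&: porbit s y = set0 by rewrite cards0 subn0.
  apply/setP => z; rewrite !inE; apply/negP => /andP [h1 h2]; move/negP: h; apply.
  rewrite -eq_porbit_mem; rewrite -eq_porbit_mem in h1; rewrite -eq_porbit_mem in h2.
  by rewrite -(eqP h1) (eqP h2).
right; set ts := tperm x y * s.
have sE : s = tperm x y * ts by rewrite /ts tpermKg.
have nts : x \notin porbit ts y.
  have e1 := porbits_mul_tperm s x y.
  have e2 := porbits_mul_tperm ts x y.
  rewrite /= -sE in e2; rewrite /= h xy in e1; rewrite xy in e2.
  apply/negP => hh; rewrite hh /= in e2; rewrite /= -/ts in e1; lia.
split; first by move=> w; rewrite {1}sE; apply: merge_W.
rewrite {1}sE merge_orbit // cardsU.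
suff -> : porbit ts x :&: porbit ts y = set0 by rewrite cards0 subn0.
apply/setP => z; rewrite !inE; apply/negP => /andP [h1 h2]; move/negP: nts; apply.
rewrite -eq_porbit_mem; rewrite -eq_porbit_mem in h1; rewrite -eq_porbit_mem in h2.
by rewrite -(eqP h1) (eqP h2).
Qed.
End Orb.

Lemma head_cat_cons (T : Type) (x0 y : T) p q : head x0 (p ++ y :: q) = head y p.
Proof. by case: p. Qed.

Lemma next_split (T : eqType) (p1 p2 : seq T) z :
  uniq (p1 ++ z :: p2) -> next (p1 ++ z :: p2) z = head (head z p1) p2.
Proof.
rewrite next_nth mem_cat inE eqxx orbT.
case: p1 => [|h p1] /=; first by rewrite eqxx; case: p2.
case/andP => hn; rewrite cat_uniq => /and3P [] _ hn2 _.
have zh : (z == h) = false.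
  by apply/negP => /eqP e; move: hn; rewrite e mem_cat inE eqxx orbT.
have zp : (z \in p1) = false.
  by apply/negP => e; move: hn2; rewrite /= e.
rewrite eq_sym zh index_cat zp /= eqxx addn0 nth_cat ltnNge leqW /= ?subSnn /=.
  by case: (p2). by [].
Qed.

Lemma bs_next (T : eqType) (A B C E : seq T) a b d z :
  uniq (A ++ a :: B ++ b :: C ++ d :: E) ->
  next (A ++ a :: C ++ d :: B ++ b :: E) z =
  next (A ++ a :: B ++ b :: C ++ d :: E)
    (if z == a then b else if z == b then d else if z == d then a else z).
Proof.
set U := A ++ _; set V := A ++ _ => uU.
have pUV : perm_eq U V.
  by apply/seq.permP => P; rewrite /U /V; do 4!rewrite ?count_cat /=; lia.
have uV : uniq V by rewrite -(perm_uniq pUV).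
have mUV : U =i V := perm_mem pUV.
have sh : forall (W : seq T) P Q, W = P ++ z :: Q -> uniq W -> next W z = head (head z P) Q.
  by move=> W P Q -> hu; rewrite next_split.
have sh' : forall (W : seq T) P Q y, W = P ++ y :: Q -> uniq W -> next W y = head (head y P) Q.
  by move=> W P Q y -> hu; rewrite next_split.
case: eqP => [->|za].
  rewrite (@sh' V A (C ++ d :: B ++ b :: E)) // (@sh' U (A ++ a :: B) (C ++ d :: E)) //;
    first by rewrite !head_cat_cons.
  by rewrite /U -catA.
case: eqP => [->|zb].
  rewrite (@sh' V (A ++ a :: C ++ d :: B) E) ?(@sh' U (A ++ a :: B ++ b :: C) E) //;
    first by rewrite !head_cat_cons.
    by rewrite /U -catA /= -catA.
  by rewrite /V -catA /= -catA.
case: eqP => [->|zd].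
  rewrite (@sh' V (A ++ a :: C) (B ++ b :: E)) ?(@sh' U A (B ++ b :: C ++ d :: E)) //;
    first by rewrite !head_cat_cons.
  by rewrite /V -catA.
case: (boolP (z \in U)) => zU; last first.
  by rewrite !next_nth -(mUV z) (negPf zU).
have spl : forall (X : seq T), z \in X -> exists P Q, X = P ++ z :: Q.
  by move=> X /splitPr [P Q]; exists P, Q.
move: zU; rewrite /U mem_cat inE (negPf (introN eqP za)) /= mem_cat inE (negPf (introN eqP zb)).
rewrite /= mem_cat inE (negPf (introN eqP zd)) /=.
case/orP => [/spl [P [Q eX]]|].
  rewrite (@sh' V P (Q ++ a :: C ++ d :: B ++ b :: E)) ?(@sh' U P (Q ++ a :: B ++ b :: C ++ d :: E)) //;
    first by rewrite !head_cat_cons.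
    by rewrite /U eX -catA.
  by rewrite /V eX -catA.
case/orP => [/spl [P [Q eX]]|].
  rewrite (@sh' V (A ++ a :: C ++ d :: P) (Q ++ b :: E)) ?(@sh' U (A ++ a :: P) (Q ++ b :: C ++ d :: E)) //;
    first by rewrite !head_cat_cons.
    by rewrite /U eX -!catA /= -?catA /= -?catA.
  by rewrite /V eX -!catA /= -?catA /= -?catA.
case/orP => [/spl [P [Q eC]]|/spl [P [Q eE]]].
  rewrite (@sh' V (A ++ a :: P) (Q ++ d :: B ++ b :: E)) ?(@sh' U (A ++ a :: B ++ b :: P) (Q ++ d :: E)) //;
    first by rewrite !head_cat_cons.
    by rewrite /U eC -!catA /= -?catA /= -?catA.
  by rewrite /V eC -!catA /= -?catA /= -?catA.
rewrite (@sh' V (A ++ a :: C ++ d :: B ++ b :: P) Q) ?(@sh' U (A ++ a :: B ++ b :: C ++ d :: P) Q) //;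
  first by rewrite !head_cat_cons.
  by rewrite /U eE -!catA /= -?catA /= -?catA.
by rewrite /V eE -!catA /= -?catA /= -?catA.
Qed.
Lemma split_last (T : Type) (X : seq T) : 0 < size X -> exists A a, X = A ++ [:: a].
Proof. by case/lastP: X => // A a _; exists A, a; rewrite cats1. Qed.

Lemma card_set_cond (T : finType) (A : {set T}) (P : pred T) :
  #|[set c in A | P c]| = (\sum_(c in A) P c)%N.
Proof.
rewrite -sum1_card big_mkcond /= [RHS]big_mkcond /=; apply: eq_bigr => c _.
by rewrite !inE; case: (c \in A); case: (P c).
Qed.

Definition Tri (A B : nat) := (A = B + 2 \/ A = B \/ B = A + 2)%N.

Lemma arith (w : nat -> nat) W0 W1 W2 K :
  (w = (fun _ => 1%N) \/ w = (fun k => nat_of_bool (odd k)) \/ w = (fun k => nat_of_bool (~~ odd k))) ->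
  ((exists P Q, W1 + w P + w Q = W0 + w (P + Q) /\ K = P + Q) \/
   (exists Q, W0 + w K + w Q = W1 + w (K + Q)))%N ->
  ((exists R, W2 + w K + w R = W1 + w (K + R)) \/
   (exists U V, W1 + w U + w V = W2 + w (U + V) /\ K = U + V))%N ->
  Tri W0 W2.
Proof.
rewrite /Tri => hw [[P [Q [e1 eK]]]|[Q e1]] [[R e2]|[U [V [e2 eK']]]].
- subst K; case: hw => [->|[->|->]] /= in e1 e2 *; rewrite ?oddD in e1 e2;
  move: e1 e2; case: (odd P); case: (odd Q); case: (odd R) => /=; lia.
- rewrite eK in e2 eK'; case: hw => [->|[->|->]] /= in e1 e2 *; rewrite ?oddD in e1 e2;
  move: e1 e2 (eK'); move/(congr1 odd): (eK'); rewrite !oddD;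
  case: (odd P); case: (odd Q); case: (odd U); case: (odd V) => /=; lia.
- case: hw => [->|[->|->]] /= in e1 e2 *; rewrite ?oddD in e1 e2;
  move: e1 e2; case: (odd K); case: (odd Q); case: (odd R) => /=; lia.
- subst K; case: hw => [->|[->|->]] /= in e1 e2 *; rewrite ?oddD in e1 e2;
  move: e1 e2; case: (odd Q); case: (odd U); case: (odd V) => /=; lia.
Qed.
Lemma tri_m202 A B : Tri A B -> in_m202 (zdiff A B).
Proof.
rewrite /in_m202 /zdiff => -[->|[->|->]]; apply/or3P.
- by constructor 3; apply/eqP; lia.
- by constructor 2; apply/eqP; lia.
- by constructor 1; apply/eqP; lia.
Qed.
Lemma tri_dvd A B : Tri A B -> (2 %| zdiff A B)%Z.
Proof.
move=> h; have := tri_m202 h; rewrite /in_m202 => /or3P [] /eqP -> //.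
Qed.
Lemma tperm3 (T : finType) (a b d z : T) : a != b -> a != d -> b != d ->
  (tperm a b * tperm a d)%g z =
  (if z == a then b else if z == b then d else if z == d then a else z).
Proof.
move=> ab ad bd; rewrite permM.
have da : d != a by rewrite eq_sym.
have db : d != b by rewrite eq_sym.
have ba : b != a by rewrite eq_sym.
case: (z =P a) => [->|/eqP za]; first by rewrite tpermL (tpermD ab db) ?eqxx.
case: (z =P b) => [->|/eqP zb]; first by rewrite tpermR tpermL ?(negPf ba) ?eqxx.
case: (z =P d) => [->|/eqP zd]; first by rewrite (tpermD ad bd) tpermR ?(negPf da) ?(negPf db) ?eqxx.
rewrite ?(negPf za) ?(negPf zb) ?(negPf zd).
by rewrite !tpermD // eq_sym.
Qed.

Theorem lemma3 (n : nat) (sq : seq 'I_n) (s pi sh : {perm 'I_n}) (i j l : nat) :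
  size sq = n -> uniq sq -> is_cyc_of sq s ->
  1 <= i -> i <= j -> j.+1 <= l -> l <= n.-1 ->
  is_cyc_of (block_swap sq i j j.+1 l) sh ->
  let D := compp s (pi^-1)%g in
  let pih := compp (D^-1)%g sh in
  (2 %| zdiff (ncyc pi) (ncyc pih))%Z /\
  in_m202 (zdiff (ncyc pi) (ncyc pih)) /\
  in_m202 (zdiff (nodd pi) (nodd pih)) /\
  in_m202 (zdiff (neven pi) (neven pih)).
Proof.
move=> hsz huq hs hi hij hjl hln hsh D pih.
have e1 : sq = take i sq ++ slice sq i j ++ slice sq j.+1 l ++ drop l.+1 sq.
  rewrite /slice.
  have h1 : drop i sq = take (j.+1 - i) (drop i sq) ++ drop j.+1 sq.
    by rewrite -{1}(cat_take_drop (j.+1 - i) (drop i sq)) drop_drop subnK //; lia.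
  have h2 : drop j.+1 sq = take (l.+1 - j.+1) (drop j.+1 sq) ++ drop l.+1 sq.
    by rewrite -{1}(cat_take_drop (l.+1 - j.+1) (drop j.+1 sq)) drop_drop subnK //; lia.
  by rewrite -h2 -h1 cat_take_drop.
have e2 : block_swap sq i j j.+1 l = take i sq ++ slice sq j.+1 l ++ slice sq i j ++ drop l.+1 sq.
  by rewrite /block_swap (_ : slice sq j.+1 j.+1.-1 = [::]) // /slice /= subnn take0.
have [A [a eA]] : exists A a, take i sq = A ++ [:: a].
  by apply: split_last; rewrite size_takel; lia.
have [B [b eB]] : exists B b, slice sq i j = B ++ [:: b].
  by apply: split_last; rewrite /slice size_takel; [lia | rewrite size_drop; lia].
have [C [d eC]] : exists C d, slice sq j.+1 l = C ++ [:: d].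
  by apply: split_last; rewrite /slice size_takel; [lia | rewrite size_drop; lia].
set E := drop l.+1 sq in e1 e2.
have eU : sq = A ++ a :: B ++ b :: C ++ d :: E.
  by rewrite {1}e1 eA eB eC -!catA.
have eV : block_swap sq i j j.+1 l = A ++ a :: C ++ d :: B ++ b :: E.
  by rewrite e2 eA eB eC -!catA.
have uU : uniq (A ++ a :: B ++ b :: C ++ d :: E) by rewrite -eU.
have [ab ad bd] : [/\ a != b, a != d & b != d].
  move: (uU); rewrite cat_uniq => /and3P [_ _]; rewrite cons_uniq => /andP [ha].
  rewrite cat_uniq => /and3P [_ _]; rewrite cons_uniq => /andP [hb _].
  split.
  - by apply: contra ha => /eqP ->; rewrite !(mem_cat, inE) eqxx ?orbT.
  - by apply: contra ha => /eqP ->; rewrite !(mem_cat, inE) eqxx ?orbT.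
  - by apply: contra hb => /eqP ->; rewrite !(mem_cat, inE) eqxx ?orbT.
have shE : sh = (tperm a b * tperm a d * s)%g.
  apply/permP => z; rewrite hsh eV bs_next // permM tperm3 // hs eU //.
have pihE : pih = (tperm a b * (tperm a d * pi))%g.
  by rewrite /pih /compp /D shE invMg invgK !mulgA mulgK.
set s1 := (tperm a d * pi)%g in pihE.
have st1 := step pi ad; have st2 := step s1 ab; rewrite -/s1 -pihE in st2.
have key : forall w, (w = (fun _ => 1%N) \/ w = (fun k => nat_of_bool (odd k)) \/
                      w = (fun k => nat_of_bool (~~ odd k))) -> Tri (Wt w pi) (Wt w pih).
  move=> w hw; apply: (arith (W1 := Wt w s1) (K := #|porbit s1 a|) hw).
    case: st1 => [[h1 h2]|[h1 h2]]; [left; exists #|porbit pi a|, #|porbit pi d| | right; exists #|porbit s1 d|]; by rewrite ?h1.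
  case: st2 => [[h1 h2]|[h1 h2]]; [left; exists #|porbit s1 b| | right; exists #|porbit pih a|, #|porbit pih b|]; by rewrite ?h1.
have nc : forall p : {perm 'I_n}, ncyc p = Wt (fun _ => 1%N) p.
  by move=> p; rewrite /ncyc /Wt sum1_card.
have no : forall p : {perm 'I_n}, nodd p = Wt (fun k => nat_of_bool (odd k)) p.
  by move=> p; rewrite /nodd card_set_cond.
have ne : forall p : {perm 'I_n}, neven p = Wt (fun k => nat_of_bool (~~ odd k)) p.
  by move=> p; rewrite /neven card_set_cond.
rewrite !nc !no !ne; split; first by apply: tri_dvd; apply: key; left.
split; first by apply: tri_m202; apply: key; left.
by split; apply: tri_m202; apply: key; right; [left|right].
Qed.
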